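(* Let $(V,E,c,p)$ be a PCSTP instance and $v_i,v_j\in V$. If $$p(v_i) > d^-_{pc}(v_i,v_j),$$ then every optimal solution that contains $v_j$ also contains $v_i$.
   Context: A PCSTP instance $(V,E,c,p)$: finite undirected connected graph $G=(V,E)$, $c:E\to\mathbb{Q}_{>0}$, $p:V\to\mathbb{Q}_{\ge0}$. For a tree $S\subseteq G$ (connected acyclic subgraph with at least one vertex), $C(S):=\sum_{e\in E(S)}c(e)+\sum_{v\in V\setminus V(S)}p(v)$; an optimal solution is a tree minimizing $C$. $T_p:=\{v\in V:p(v)>0\}$. A prize-constrained $(v_i,v_j)$-walk is a finite walk $W=(v_{i_1},e_{i_1},\dots,e_{i_{r-1}},v_{i_r})$ with $v_{i_1}=v_i$, $v_{i_r}=v_j$ in which no vertex of $T_p\cup\{v_i,v_j\}$ occurs more than once. $V(W),E(W)$ are its vertex and edge sets; for $1\le k\le r$, $W[1,k]$ is the initial subwalk $(v_{i_1},\dots,v_{i_k})$. For a walk $W$ from $a$ to $b$, $c_{pc}(W):=\sum_{e\in E(W)}c(e)-\sum_{v\in V(W)\setminus\{a,b\}}p(v)$. The left-rooted prize-constrained length is $l^-_{pc}(W):=\max\{c_{pc}(W[1,k]): 1\le k\le r,\ v_{i_k}\in T_p\cup\{v_j\}\}$, and the left-rooted prize-constrained distance is $d^-_{pc}(v_i,v_j):=\inf\{l^-_{pc}(W): W\text{ a prize-constrained }(v_i,v_j)\text{-walk}\}$ (not symmetric in general). *)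

(* Defs.v *)
From HB Require Import structures.
From mathcomp Require Import all_boot all_order all_algebra.
Set Implicit Arguments. Unset Strict Implicit. Unset Printing Implicit Defensive.
Import Order.TTheory GRing.Theory Num.Theory.
Local Open Scope ring_scope.

(* An undirected (multi)graph: finite vertex type V, finite edge type E,
   each edge e joins the endpoints src e and dst e. Costs c : E -> rat,
   prizes p : V -> rat. *)
Section PCSTP.
Variables (V E : finType) (src dst : E -> V).

Definition joins (e : E) (x y : V) : bool :=
  ((src e == x) && (dst e == y)) || ((src e == y) && (dst e == x)).

(* A walk starting at x is given by its sequence of steps (edge, next vertex). *)
Fixpoint is_walk (x : V) (s : seq (E * V)) : bool :=
  if s is (e, y) :: s' then joins e x y && is_walk y s' else true.

Definition wverts (x : V) (s : seq (E * V)) : seq V := x :: map snd s.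
Definition wedges (s : seq (E * V)) : seq E := map fst s.
Definition wend (x : V) (s : seq (E * V)) : V := last x (map snd s).

Definition connected_graph : Prop :=
  forall x y : V, exists s, is_walk x s /\ wend x s = y.

Variables (c : E -> rat) (p : V -> rat).

Definition Tp : pred V := fun v => 0 < p v.

Definition pc_walk (vi vj : V) (s : seq (E * V)) : Prop :=
  [/\ is_walk vi s, wend vi s = vj &
      forall v, (Tp v || (v == vi) || (v == vj)) -> count_mem v (wverts vi s) <= 1]%N.

(* c_pc of the walk (a, s) from a to its end b: edge SET and vertex SET *)
Definition cpc (a : V) (s : seq (E * V)) : rat :=
  \sum_(e <- undup (wedges s)) c e
  - \sum_(v <- undup (wverts a s) | (v != a) && (v != wend a s)) p v.

(* left-rooted prize-constrained length; the prefix W[1,k] (k vertices)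
   corresponds to take (k-1) s. The maximum ranges over a set that always
   contains the full walk (k = r, ending at vj), whose value is the seed. *)
Definition lpc (vi vj : V) (s : seq (E * V)) : rat :=
  \big[Num.max/cpc vi s]_(k <- iota 0 (size s).+1
       | Tp (wend vi (take k s)) || (wend vi (take k s) == vj))
     cpc vi (take k s).

Definition is_dpc (vi vj : V) (d : rat) : Prop :=
  (forall s, pc_walk vi vj s -> d <= lpc vi vj s) /\
  (forall d', (forall s, pc_walk vi vj s -> d' <= lpc vi vj s) -> d' <= d).

Definition in_sub (VS : {set V}) (ES : {set E}) (x : V) (s : seq (E * V)) : bool :=
  is_walk x s && all (fun e => e \in ES) (wedges s) && all (fun v => v \in VS) (wverts x s).

Definition is_cycle (VS : {set V}) (ES : {set E}) (x : V) (s : seq (E * V)) : bool :=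
  [&& in_sub VS ES x s, s != [::], wend x s == x, uniq (wedges s) & uniq (map snd s)].

Definition is_tree (VS : {set V}) (ES : {set E}) : Prop :=
  [/\ VS != set0,
      forall e, e \in ES -> (src e \in VS) && (dst e \in VS),
      forall x y, x \in VS -> y \in VS -> exists s, in_sub VS ES x s /\ wend x s = y
    & forall x s, ~~ is_cycle VS ES x s].

Definition cost (VS : {set V}) (ES : {set E}) : rat :=
  \sum_(e in ES) c e + \sum_(v in ~: VS) p v.

Definition optimal (VS : {set V}) (ES : {set E}) : Prop :=
  is_tree VS ES /\ forall VS' ES', is_tree VS' ES' -> cost VS ES <= cost VS' ES'.

End PCSTP.

(* Main.v *)
Require Import Defs.
From HB Require Import structures.
From mathcomp Require Import all_boot all_order all_algebra.
From mathcomp Require Import lra.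
From Stdlib Require Import Classical.
Set Implicit Arguments. Unset Strict Implicit. Unset Printing Implicit Defensive.
Import Order.TTheory GRing.Theory Num.Theory.
Local Open Scope ring_scope.

Section Walks.
Variables (V E : finType) (src dst : E -> V).
Implicit Types (x y : V) (e : E) (s : seq (E * V)) (VS : {set V}) (ES : {set E}).
Local Notation walk := (is_walk src dst).
Local Notation isub := (in_sub src dst).

Lemma joinsC e x y : joins src dst e x y = joins src dst e y x.
Proof. by rewrite /joins orbC. Qed.

Lemma walk_cat x (s1 s2 : seq (E * V)) : walk x (s1 ++ s2) = walk x s1 && walk (wend x s1) s2.
Proof. by elim: s1 x => [|[e y] s1 IH] x //=; rewrite IH andbA. Qed.

Lemma wend_cat x (s1 s2 : seq (E * V)) : wend x (s1 ++ s2) = wend (wend x s1) s2.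
Proof. by rewrite /wend map_cat last_cat. Qed.

Lemma isub_nil VS ES x : isub VS ES x [::] = (x \in VS).
Proof. by rewrite /in_sub /= andbT. Qed.

Lemma isub_cons VS ES x e y s : isub VS ES x ((e, y) :: s) =
  [&& joins src dst e x y, e \in ES, x \in VS & isub VS ES y s].
Proof.
rewrite /in_sub /=.
case: (joins _ _ _ _ _); case: (walk _ _); case: (e \in ES); case: (x \in VS);
 case: (y \in VS); case: (all _ _); case: (all _ _) => //.
Qed.

Lemma isub_head VS ES x s : isub VS ES x s -> x \in VS.
Proof. by case: s => [|[e y] s]; rewrite ?isub_nil ?isub_cons // => /and4P[]. Qed.

Lemma isub_cat VS ES x (s1 s2 : seq (E * V)) :
  isub VS ES x (s1 ++ s2) = isub VS ES x s1 && isub VS ES (wend x s1) s2.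
Proof.
elim: s1 x => [|[e y] s1 IH] x /=.
  rewrite isub_nil /wend /=; apply/idP/idP => [H|/andP[]//].
  by rewrite (isub_head H).
by rewrite !isub_cons IH /wend /= !andbA.
Qed.

Lemma isub_mono VS ES (VS2 : {set V}) (ES2 : {set E}) x s : VS \subset VS2 -> ES \subset ES2 ->
  isub VS ES x s -> isub VS2 ES2 x s.
Proof.
move=> /subsetP HV /subsetP HE; elim: s x => [|[e y] s IH] x.
  by rewrite !isub_nil => /HV.
rewrite !isub_cons => /and4P[-> /HE -> /HV -> /IH ->]. by [].
Qed.

Fixpoint revw (x : V) (s : seq (E * V)) : seq (E * V) :=
  if s is (e, y) :: s' then rcons (revw y s') (e, x) else [::].

Lemma isub_rev VS ES x s : isub VS ES x s ->
  isub VS ES (wend x s) (revw x s) /\ wend (wend x s) (revw x s) = x.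
Proof.
elim: s x => [|[e y] s IH] x /=.
  by rewrite isub_nil /wend /= => ->.
rewrite isub_cons => /and4P[J eE xV Hs]; have [H1 H2] := IH _ Hs.
have -> : wend x ((e, y) :: s) = wend y s by [].
rewrite -cats1 isub_cat wend_cat H2 H1 /= isub_cons isub_nil joinsC J eE xV.
by rewrite (isub_head Hs).
Qed.

Lemma prefix_reach x s v : v \in wverts x s -> exists t u, s = t ++ u /\ wend x t = v.
Proof.
elim: s x => [|[e y] s IH] x.
  by rewrite /wverts /= inE => /eqP ->; exists [::], [::].
rewrite /wverts /= inE => /orP[/eqP ->|H]; first by exists [::], ((e, y) :: s).
have [t [u [-> <-]]] := IH y H.
by exists ((e, y) :: t), u.
Qed.

Lemma walk_ends x s e : walk x s -> e \in wedges s ->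
  (src e \in wverts x s) && (dst e \in wverts x s).
Proof.
elim: s x => [|[f y] s IH] x //=.
move=> /andP[J Hs]; rewrite /wedges /= inE => /orP[/eqP ->|He].
  move: J; rewrite /joins /wverts /= !inE.
  by case/orP=> /andP[/eqP -> /eqP ->]; rewrite !eqxx ?orbT.
have /andP[H1 H2] := IH y Hs He.
rewrite /wverts /= !in_cons; apply/andP; split; apply/orP; right; by [rewrite -in_cons | rewrite -in_cons].
Qed.

Lemma isub_self x s : walk x s ->
  isub [set v | v \in wverts x s] [set e | e \in wedges s] x s.
Proof.
move=> Hw; rewrite /in_sub Hw; apply/andP; split; [apply/andP; split=> //|];
  by apply/allP => z Hz; rewrite inE.
Qed.

Lemma isub_restrict VS ES x s e : isub VS ES x s -> e \notin wedges s ->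
  isub VS (ES :\ e) x s.
Proof.
elim: s x => [|[f y] s IH] x; first by rewrite !isub_nil.
rewrite !isub_cons /wedges /= inE negb_or => /and4P[-> fE -> Hs] /andP[fe He].
by rewrite in_setD1 eq_sym fe fE IH.
Qed.

Lemma joins2 e a b x y : joins src dst e a b -> joins src dst e x y ->
  (a == x) && (b == y) || (a == y) && (b == x).
Proof.
rewrite /joins => /orP[/andP[/eqP<- /eqP<-]|/andP[/eqP<- /eqP<-]]
  /orP[/andP[/eqP<- /eqP<-]|/andP[/eqP<- /eqP<-]]; by rewrite !eqxx ?orbT.
Qed.

Lemma reroute VS F e x y (P1 P2 : seq (E * V)) :
  isub VS (F :\ e) x P1 -> wend x P1 = y ->
  isub VS (F :\ e) y P2 -> wend y P2 = x -> joins src dst e x y ->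
  forall a w, isub VS F a w -> exists w', isub VS (F :\ e) a w' /\ wend a w' = wend a w.
Proof.
move=> H1 E1 H2 E2 J a w; elim: w a => [|[f b] w IH] a.
  by move=> H; exists [::]; rewrite !isub_nil in H *.
rewrite isub_cons => /and4P[Jf fF aV Hw].
have [w' [Hw' Ew']] := IH b Hw.
have -> : wend a ((f, b) :: w) = wend b w by [].
case: (eqVneq f e) => [fe|fne].
  subst f; case/orP: (joins2 Jf J) => /andP[/eqP ea /eqP eb]; subst a b.
    by exists (P1 ++ w'); rewrite isub_cat wend_cat E1 H1 Hw'.
  by exists (P2 ++ w'); rewrite isub_cat wend_cat E2 H2 Hw'.
exists ((f, b) :: w'); rewrite isub_cons Jf in_setD1 fne fF aV Hw'. by [].
Qed.

Lemma cycle_edge VS F x s : is_cycle src dst VS F x s ->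
  exists e y s2, [/\ joins src dst e x y, e \in F, isub VS F y s2,
                     wend y s2 = x & e \notin wedges s2].
Proof.
rewrite /is_cycle => /and5P[Hs sne /eqP He Hu _].
case: s Hs sne He Hu => [|[e y] s2] //.
rewrite isub_cons => /and4P[J eF xV Hs2] _ He /= /andP[Hn _].
by exists e, y, s2; split.
Qed.

Lemma span_tree (c : E -> rat) (Hc : forall e, 0 <= c e) n : forall VS (F : {set E}),
  (#|F| <= n)%N -> VS != set0 ->
  (forall e, e \in F -> (src e \in VS) && (dst e \in VS)) ->
  (forall x y, x \in VS -> y \in VS -> exists s, isub VS F x s /\ wend x s = y) ->
  exists F', is_tree src dst VS F' /\ \sum_(e in F') c e <= \sum_(e in F) c e.
Proof.
elim: n => [|n IH] VS F Hn Hne Hend Hcon;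
  (case: (classic (exists x s, is_cycle src dst VS F x s)) => [[x [s Hcyc]]|Hno];
  [| exists F; split => //; split => // x s; apply/negP => H; apply: Hno; by exists x, s]).
  have [e [y [s2 [_ eF _ _ _]]]] := cycle_edge Hcyc.
  by move: Hn; rewrite (cardsD1 e F) eF.
have [e [y [s2 [J eF Hs2 Ee He]]]] := cycle_edge Hcyc.
have H2 := isub_restrict Hs2 He.
have [H1 E1] := isub_rev H2; rewrite Ee in H1 E1.
have Hn' : (#|F :\ e| <= n)%N by move: Hn; rewrite (cardsD1 e F) eF.
have Hend' : forall f, f \in F :\ e -> (src f \in VS) && (dst f \in VS).
  by move=> f; rewrite in_setD1 => /andP[_ /Hend].
have Hcon' : forall a b, a \in VS -> b \in VS ->
    exists s, isub VS (F :\ e) a s /\ wend a s = b.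
  move=> a b aV bV; have [w [Hw Ew]] := Hcon a b aV bV.
  have [w' [Hw' Ew']] := reroute H1 E1 H2 Ee J Hw.
  by exists w'; rewrite Ew'.
have [F' [HT HF']] := IH VS (F :\ e) Hn' Hne Hend' Hcon'.
exists F'; split => //; apply: (le_trans HF').
by rewrite [X in _ <= X](big_setD1 _ eF) /= lerDr Hc.
Qed.
End Walks.

Lemma sum_setU_le (T : finType) (A B : {set T}) (f : T -> rat) :
  (forall x, 0 <= f x) ->
  \sum_(x in A :|: B) f x <= \sum_(x in A) f x + \sum_(x in B) f x.
Proof.
move=> f0; rewrite (bigID (fun x => x \in A)) /=; apply: lerD.
  by rewrite le_eqVlt; apply/orP; left; apply/eqP; apply: eq_bigl => x; rewrite inE; case: (x \in A); case: (x \in B).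
rewrite [X in _ <= X](bigID (fun x => x \in A)) /= ler_wpDl ?sumr_ge0 //.
by rewrite le_eqVlt; apply/orP; left; apply/eqP; apply: eq_bigl => x; rewrite inE; case: (x \in A); case: (x \in B).
Qed.

Lemma sum_undup (T : finType) (s : seq T) (P : pred T) (f : T -> rat) :
  \sum_(x <- undup s | P x) f x = \sum_(x | (x \in s) && P x) f x.
Proof.
rewrite big_mkcond big_uniq ?undup_uniq //= big_mkcond [RHS]big_mkcond /=.
by apply: eq_bigr => x _; rewrite mem_undup; case: (x \in s).
Qed.

Lemma sum_undup_set (T : finType) (s : seq T) (f : T -> rat) :
  \sum_(x <- undup s) f x = \sum_(x in [set x | x \in s]) f x.
Proof.
rewrite big_uniq ?undup_uniq //; apply: eq_bigl => x; by rewrite inE mem_undup.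
Qed.

Lemma bigmax_ge (I : eqType) (r : seq I) (P : pred I) (F : I -> rat) i0 k :
  k \in r -> P k -> F k <= \big[Num.max/i0]_(y <- r | P y) F y.
Proof.
elim: r => [|a r IH] //; rewrite inE big_cons => /orP[/eqP <- -> | /IH H /H {}H].
  by rewrite le_max lexx.
by case: (P a) => //; rewrite le_max H orbT.
Qed.

Lemma lpc_ge (V E : finType) (c : E -> rat) (p : V -> rat) vi vj (s : seq (E * V)) k :
  (k <= size s)%N -> Tp p (wend vi (take k s)) || (wend vi (take k s) == vj) ->
  cpc c p vi (take k s) <= lpc c p vi vj s.
Proof.
move=> ks Hk; rewrite /lpc.
have Hin : k \in iota 0 (size s).+1 by rewrite mem_iota add0n ltnS ks.
exact: (bigmax_ge _ _ Hin).
Qed.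

Theorem proposition5 (V E : finType) (src dst : E -> V) (c : E -> rat) (p : V -> rat)
  (Hconn : connected_graph src dst)
  (Hc : forall e, 0 < c e) (Hp : forall v, 0 <= p v)
  (vi vj : V) (d : rat) (Hd : is_dpc src dst c p vi vj d) (Hlt : d < p vi) :
  forall (VS : {set V}) (ES : {set E}),
    optimal src dst c p VS ES -> vj \in VS -> vi \in VS.
Proof.
move=> VS ES [HT Hopt] vjV.
case: (boolP (vi \in VS)) => // viV; exfalso.
have [s [Hpc Hl]] : exists s, pc_walk src dst p vi vj s /\ lpc c p vi vj s < p vi.
  apply: NNPP => Hn.
  have : p vi <= d.
    apply: Hd.2 => s Hs; rewrite leNgt; apply/negP => H; apply: Hn; by exists s.
  by rewrite leNgt Hlt.
case: Hpc => Hw Hend _.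
pose P := fun k => [&& (k <= size s)%N,
   Tp p (wend vi (take k s)) || (wend vi (take k s) == vj) &
   has (mem VS) (wverts vi (take k s))].
have exP : exists k, P k.
  exists (size s); rewrite /P take_size Hend leqnn eqxx orbT !andTb.
  apply/hasP; exists vj => //; rewrite -Hend /wverts /wend; exact: mem_last.
case: (ex_minnP exP) => k /and3P[ks Htp Hhas] Hmin.
set t := take k s in Htp Hhas.
have Hwt : is_walk src dst vi t.
  by move: Hw; rewrite -(cat_take_drop k s) walk_cat => /andP[].
have szt : (size t <= k)%N by rewrite /t size_take_min geq_minl.
have Hzero : forall v, v \in wverts vi t -> v != vi -> v != wend vi t ->
    v \in VS -> p v = 0.
  move=> v Hv nvi nend vV.
  have [t1 [t2 [Ht Ev]]] := prefix_reach Hv.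
  have sz1 : (size t1 <= size t)%N by rewrite Ht size_cat leq_addr.
  have Et1 : take (size t1) s = t1.
    rewrite -(minn_idPl (leq_trans sz1 szt)) take_min -/t Ht.
    exact: take_size_cat.
  apply/eqP; rewrite eq_le Hp andbT leNgt; apply/negP => pos.
  have : P (size t1).
    rewrite /P Et1 Ev (leq_trans (leq_trans sz1 szt) ks) /Tp pos !andTb.
    apply/hasP; exists v => //; rewrite -Ev /wverts /wend; exact: mem_last.
  move/Hmin => kt1.
  have e1 : size t1 = size t by apply/eqP; rewrite eqn_leq sz1 (leq_trans szt kt1).
  move: Ht; rewrite -[t]cats0 => Ht.
  have Et : t1 = t.
    move: (Ht); rewrite cats0 => Ht'.
    have : size t2 = 0%N by move: (congr1 size Ht'); rewrite size_cat e1 => /eqP; rewrite -{1}(addn0 (size t)) eqn_add2l => /eqP.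
    by move/size0nil => H2; rewrite Ht' H2 cats0.
  by move: nend; rewrite -Et Ev eqxx.
have Hcpc : cpc c p vi t <= lpc c p vi vj s by exact: lpc_ge.
case: HT => HVne Hend0 Hcon0 _.
case/hasP: Hhas => w wt wV.
pose VS' := VS :|: [set v | v \in wverts vi t].
pose ES' := ES :|: [set e | e \in wedges t].
have Hself : in_sub src dst VS' ES' vi t.
  exact: (isub_mono (subsetUr _ _) (subsetUr _ _) (isub_self Hwt)).
have Hreach : forall u, u \in VS' -> exists q, in_sub src dst VS' ES' u q /\ wend u q = w.
  move=> u; rewrite inE => /orP[uV|].
    have [q [Hq Eq]] := Hcon0 u w uV wV.
    by exists q; split => //; exact: (isub_mono (subsetUl _ _) (subsetUl _ _) Hq).
  rewrite inE => ut.
  have [t1 [t2 [Ht1 Eu]]] := prefix_reach ut.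
  have [t3 [t4 [Ht3 Ew]]] := prefix_reach wt.
  have H1 : in_sub src dst VS' ES' vi t1 by move: Hself; rewrite Ht1 isub_cat => /andP[].
  have H3 : in_sub src dst VS' ES' vi t3 by move: Hself; rewrite Ht3 isub_cat => /andP[].
  have [R1 ER1] := isub_rev H1.
  exists (revw vi t1 ++ t3); rewrite -Eu isub_cat wend_cat ER1 R1 H3 Ew.
  by [].
have Hcon' : forall x y, x \in VS' -> y \in VS' ->
    exists q, in_sub src dst VS' ES' x q /\ wend x q = y.
  move=> x y xV yV.
  have [qx [Hx Ex]] := Hreach x xV; have [qy [Hy Ey]] := Hreach y yV.
  have [R ER] := isub_rev Hy.
  exists (qx ++ revw y qy); rewrite isub_cat wend_cat Ex Hx -Ey R ER.
  by [].
have Hne' : VS' != set0.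
  by apply/set0Pn; exists vi; rewrite !inE eqxx orbT.
have Hend' : forall e, e \in ES' -> (src e \in VS') && (dst e \in VS').
  move=> e; rewrite inE => /orP[/Hend0/andP[H1 H2]|].
    by rewrite !inE H1 H2.
  rewrite inE => /(walk_ends Hwt) /andP[H1 H2].
  by rewrite !in_setU !in_set H1 H2 !orbT.
have Hc0 : forall e, 0 <= c e by move=> e; exact: ltW.
have [F' [HT' HF']] := span_tree Hc0 (leqnn #|ES'|) Hne' Hend' Hcon'.
have Hcost := Hopt VS' F' HT'.
move: Hcost; rewrite /cost => Hcost.
have HA := sum_setU_le ES [set e | e \in wedges t] Hc0.
have HB := sum_undup_set (wedges t) c.
have HC : \sum_(v in ~: VS) p v = \sum_(v in ~: VS') p v +
     \sum_(v | (v \in wverts vi t) && (v \notin VS)) p v.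
  rewrite (bigID (fun v => v \in VS')) /= addrC; congr (_ + _).
    by apply: eq_bigl => v; rewrite !inE; case: (v \in VS); case: (v \in wverts vi t).
  by apply: eq_bigl => v; rewrite !in_setC !in_setU !in_set; case: (v \in VS); case: (v \in wverts vi t).
have HD : p vi + \sum_(v <- undup (wverts vi t) | (v != vi) && (v != wend vi t)) p v
    <= \sum_(v | (v \in wverts vi t) && (v \notin VS)) p v.
  rewrite sum_undup [X in _ <= X](bigD1 vi) /=; last by rewrite viV andbT /wverts mem_head.
  rewrite lerD2l big_mkcond [X in _ <= X]big_mkcond /=.
  apply: ler_sum => v _.
  case: (boolP (v \in wverts vi t)) => //= vt.
  case: (eqVneq v vi) => [_|nvi] /=; first by rewrite andbF.
  case: (eqVneq v (wend vi t)) => [_|nend] /=; first by case: ifP.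
  case: (boolP (v \in VS)) => vV /=; last by [].
  by rewrite (Hzero v vt nvi nend vV).
move: Hcpc; rewrite /cpc => Hcpc.
lra.
Qed.
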